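(* Let $B\subseteq A$ be a Frobenius extension of rings whose Frobenius homomorphism $E:A\to B$ is surjective, and let $P$ be a progenerator right $A$-module. Then the natural inclusion $\mathrm{End}\,P_A\hookrightarrow\mathrm{End}\,P_B$ is a Frobenius extension.
   Context: A ring extension $B\subseteq A$ is a Frobenius extension if $A_B$ is finitely generated projective and there is a $B$-$B$-bimodule map $E:A\to B$ (the Frobenius homomorphism) and elements $x_i,y_i\in A$ with $\sum_iE(ax_i)y_i=a=\sum_ix_iE(y_ia)$ for all $a\in A$. A progenerator is a finitely generated projective generator. $\mathrm{End}\,P_B$ denotes endomorphisms of $P$ regarded as a right $B$-module by restriction. *)

(* Defs.v *)
From HB Require Import structures.
From mathcomp Require Import all_boot all_order all_algebra.
Set Implicit Arguments. Unset Strict Implicit. Unset Printing Implicit Defensive.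
Import GRing.Theory.
Local Open Scope ring_scope.

(* Frobenius extensions, stated for a "big" ring sitting inside a carrier S *)
(* with addition [add], multiplication [mul] and zero [zero]; the big ring  *)
(* is the subset [Big] of S and the subring is the subset [Small] of S.     *)
(* This raw form is needed because End P_B is not a MathComp ringType; it   *)
(* is used uniformly both for B ⊆ A and for End P_A ⊆ End P_B.              *)
Section FrobeniusExt.
Variables (S : Type) (add mul : S -> S -> S) (zero : S) (Big Small : S -> Prop).

Definition small_vec n (v : 'I_n -> S) := forall i, Small (v i).

(* Big, as a right Small-module (via mul), is finitely generated projective:
   a direct summand (retract) of a free module Small^n of finite rank. *)
Definition fgproj_right : Prop :=
  exists n (p : S -> 'I_n -> S) (s : ('I_n -> S) -> S),
  [/\ forall a, Big a -> small_vec (p a),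
      forall a a', Big a -> Big a' -> forall i, p (add a a') i = add (p a i) (p a' i)
    & forall a t, Big a -> Small t -> forall i, p (mul a t) i = mul (p a i) t] /\
  [/\ forall v, small_vec v -> Big (s v),
      forall v w, small_vec v -> small_vec w ->
        s (fun i => add (v i) (w i)) = add (s v) (s w)
    & forall v t, small_vec v -> Small t -> s (fun i => mul (v i) t) = mul (s v) t] /\
  (forall a, Big a -> s (p a) = a).

Definition frobenius_system (E : S -> S) : Prop :=
  [/\ forall a, Big a -> Small (E a),
      forall a a', Big a -> Big a' -> E (add a a') = add (E a) (E a'),
      forall b a, Small b -> Big a -> E (mul b a) = mul b (E a),
      forall a b, Big a -> Small b -> E (mul a b) = mul (E a) b
    & exists n (x y : 'I_n -> S), (forall i, Big (x i) /\ Big (y i)) /\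
        forall a, Big a ->
          \big[add/zero]_(i < n) mul (E (mul a (x i))) (y i) = a /\
          \big[add/zero]_(i < n) mul (x i) (E (mul (y i) a)) = a].

Definition frobenius_ext : Prop := fgproj_right /\ exists E, frobenius_system E.

Definition frobenius_ext_surj : Prop :=
  fgproj_right /\ exists E, frobenius_system E /\
    forall b, Small b -> exists a, Big a /\ E a = b.

End FrobeniusExt.

(* Right modules over a ring R are left modules over the converse ring R^c: *)
(* for x : P and a : R, the right action x·a is written (a : R^c) *: x.    *)
(* The free right module R^n is 'rV[R^c]_n (entrywise right mult.).        *)
Section RightModules.
Variable R : pzRingType.

Definition rlinear (M N : lmodType R^c) (f : M -> N) : Prop :=
  (forall x y, f (x + y) = f x + f y) /\ (forall (a : R^c) x, f (a *: x) = a *: f x).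

Definition fg_projective (P : lmodType R^c) : Prop :=
  exists n (p : P -> 'rV[R^c]_n) (s : 'rV[R^c]_n -> P),
    [/\ rlinear p, rlinear s & cancel p s].

Definition generator (P : lmodType R^c) : Prop :=
  exists n (f : 'I_n -> P -> 'rV[R^c]_1),
    (forall i, rlinear (f i)) /\
    forall r : 'rV[R^c]_1, exists xs : 'I_n -> P, \sum_(i < n) f i (xs i) = r.

Definition progenerator (P : lmodType R^c) : Prop := fg_projective P /\ generator P.

(* The ring End P_C of additive maps P -> P commuting with the right action
   of the elements of C ⊆ R, inside the carrier P -> P, with pointwise
   addition and composition as product. *)
Definition endo_add (P : lmodType R^c) (f g : P -> P) : P -> P := fun x => f x + g x.
Definition endo_mul (P : lmodType R^c) (f g : P -> P) : P -> P := fun x => f (g x).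
Definition endo_zero (P : lmodType R^c) : P -> P := fun _ => 0.
Definition End_over (P : lmodType R^c) (C : R -> Prop) (f : P -> P) : Prop :=
  (forall x y, f (x + y) = f x + f y) /\
  (forall (a : R), C a -> forall x : P, f ((a : R^c) *: x) = (a : R^c) *: f x).

End RightModules.

(* Main.v *)
Require Import Defs.
From HB Require Import structures.
From mathcomp Require Import all_boot all_order all_algebra.
From Stdlib Require Import FunctionalExtensionality.
Set Implicit Arguments. Unset Strict Implicit. Unset Printing Implicit Defensive.
Import GRing.Theory.
Local Open Scope ring_scope.

Definition ract (A : pzRingType) (P : lmodType A^c) (u : P) (a : A) : P := (a : A^c) *: u.

Lemma ractDl (A : pzRingType) (P : lmodType A^c) (u v : P) a : ract (u + v) a = ract u a + ract v a.
Proof. exact: scalerDr. Qed.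
Lemma ractDr (A : pzRingType) (P : lmodType A^c) (u : P) a b : ract u (a + b) = ract u a + ract u b.
Proof. exact: scalerDl. Qed.
Lemma ractA (A : pzRingType) (P : lmodType A^c) (u : P) a b : ract (ract u a) b = ract u (a * b).
Proof. by rewrite /ract scalerA. Qed.
Lemma ract1 (A : pzRingType) (P : lmodType A^c) (u : P) : ract u 1 = u.
Proof. exact: scale1r. Qed.

Lemma addf_sum (M N : zmodType) (f : M -> N) (I : Type) r (Pr : pred I) F :
  (forall u v, f (u + v) = f u + f v) ->
  f (\sum_(i <- r | Pr i) F i) = \sum_(i <- r | Pr i) f (F i).
Proof.
move=> fD; have f0 : f 0 = 0.
  have h := fD 0 0; rewrite addr0 in h.
  by apply: (addrI (f 0)); rewrite addr0 -h.
exact: (big_morph f fD f0).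
Qed.

Lemma ract_suml (A : pzRingType) (P : lmodType A^c) (I : Type) r (Pr : pred I) (F : I -> P) a :
  ract (\sum_(i <- r | Pr i) F i) a = \sum_(i <- r | Pr i) ract (F i) a.
Proof. by apply: addf_sum => u v; apply: ractDl. Qed.

Lemma ract_sumr (A : pzRingType) (P : lmodType A^c) (u : P) (I : Type) r (Pr : pred I) (F : I -> A) :
  ract u (\sum_(i <- r | Pr i) F i) = \sum_(i <- r | Pr i) ract u (F i).
Proof. by apply: (@addf_sum A P (ract u)) => a b; apply: ractDr. Qed.

Lemma endo_big_pt (A : pzRingType) (P : lmodType A^c) (I : Type) r (Pr : pred I) (F : I -> P -> P) u :
  (\big[@endo_add A P/@endo_zero A P]_(i <- r | Pr i) F i) u = \sum_(i <- r | Pr i) F i u.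
Proof.
apply: (big_rec2 (fun f s => f u = s)) => // i f s _ <-; by [].
Qed.

Lemma my_sum_enum (V : zmodType) (T : finType) (F : T -> V) :
  \sum_(t : T) F t = \sum_(i < #|T|) F (enum_val (A := T) i).
Proof. by rewrite -big_enum_val. Qed.

Lemma my_triple_sum (V : zmodType) (I J K : finType) (F : I * J * K -> V) :
  \sum_t F t = \sum_i \sum_j \sum_k F (i, j, k).
Proof.
rewrite (pair_bigA _ (fun i j => \sum_k F (i,j,k))) pair_bigA.
by apply: eq_bigr => [[[i j] k]] _.
Qed.
Definition Ep (A : pzRingType) (P : lmodType A^c) n (x y : 'I_n -> A) (f : P -> P) : P -> P :=
  fun u => \sum_(i < n) ract (f (ract u (x i))) (y i).
Definition Xt (A : pzRingType) (P : lmodType A^c) m n L (E : A -> A) (pj : 'I_m -> P)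
  (x : 'I_n -> A) (psi : 'I_L -> P -> A) (t : 'I_m * 'I_n * 'I_L) : P -> P :=
  fun u => ract (pj t.1.1) (x t.1.2 * E (psi t.2 u)).
Definition Yt (A : pzRingType) (P : lmodType A^c) m n L (E : A -> A) (q : 'I_L -> P)
  (y : 'I_n -> A) (phi : 'I_m -> P -> A) (t : 'I_m * 'I_n * 'I_L) : P -> P :=
  fun u => ract (q t.2) (E (y t.1.2 * phi t.1.1 u)).

Theorem mainTheorem15 (A : pzRingType) (B : {pred A})
  (hB : subring_closed B)
  (hfrob : frobenius_ext_surj +%R *%R 0 (fun _ : A => True) (fun a : A => a \in B))
  (P : lmodType A^c) (hP : progenerator P) :
  frobenius_ext (@endo_add A P) (@endo_mul A P) (@endo_zero A P)
    (@End_over A P (fun a : A => a \in B)) (@End_over A P (fun _ : A => True)).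
Proof.
case: hfrob => _ [E [[EB ED EBl EBr [n [x [y [_ Hxy]]]]] _]].
have EB' a : E a \in B := EB a I.
have ED' a a' : E (a + a') = E a + E a' := ED a a' I I.
have EBl' b a : b \in B -> E (b * a) = b * E a := fun h => EBl b a h I.
have EBr' a b : b \in B -> E (a * b) = E a * b := fun h => EBr a b I h.
have Hx1 a : \sum_(i < n) E (a * x i) * y i = a := (Hxy a I).1.
have Hx2 a : \sum_(i < n) x i * E (y i * a) = a := (Hxy a I).2.
have Esum (I : Type) r (Pr : pred I) F : E (\sum_(i <- r | Pr i) F i) = \sum_(i <- r | Pr i) E (F i).
  exact: addf_sum.
clear EB ED EBl EBr Hxy.
move: hP; rewrite /progenerator /fg_projective /generator /rlinear => -[[m [pr [sc [[prD prZ] [scD scZ] prK]]]] [L [gg [gL gen]]]].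
case: (gen (const_mx 1)) => qs Hq.
pose pj j := sc (delta_mx 0 j).
pose phi j u : A := pr u 0 j.
pose psi l u : A := gg l u 0 0.
have phiD j u v : phi j (u + v) = phi j u + phi j v by rewrite /phi prD mxE.
have phiA j u a : phi j (ract u a) = phi j u * a.
  by rewrite /phi /ract prZ mxE.
have psiD l u v : psi l (u + v) = psi l u + psi l v by rewrite /psi (gL l).1 mxE.
have psiA l u a : psi l (ract u a) = psi l u * a by rewrite /psi /ract (gL l).2 mxE.
have dual u : u = \sum_j ract (pj j) (phi j u).
  rewrite -{1}(prK u) {1}(row_sum_delta (pr u)).
  rewrite (addf_sum _ _ _ scD); apply: eq_bigr => j _; by rewrite scZ.
have gen1 : \sum_l psi l (qs l) = 1.
  by rewrite /psi -summxE Hq mxE.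
clearbody pj phi psi; clear prD prZ scD scZ prK gL gen Hq.

pose Big := @End_over A P (fun a : A => a \in B).
pose Small := @End_over A P (fun _ : A => True).
have mkEnd (C : A -> Prop) (f : P -> P) : (forall u v, f (u+v) = f u + f v) ->
  (forall a, C a -> forall u, f (ract u a) = ract (f u) a) -> End_over C f.
  by move=> h1 h2; split.
have unEnd (C : A -> Prop) (f : P -> P) : End_over C f -> (forall u v, f (u+v) = f u + f v) /\
  (forall a, C a -> forall u, f (ract u a) = ract (f u) a) by [].
have EpA f : Big f -> forall u a, Ep x y f (ract u a) = ract (Ep x y f u) a.
  move=> /unEnd [fD fB] u a; rewrite /Ep.
  transitivity (\sum_i \sum_j ract (f (ract u (x j))) (E (y j * (a * x i)) * y i)).
    apply: eq_bigr => i _; rewrite ractA -{1}[a * x i]Hx2 ract_sumr (addf_sum _ _ _ fD) ract_suml.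
    by apply: eq_bigr => j _; rewrite -ractA (fB _ (EB' _)) ractA.
  rewrite exchange_big /= ract_suml; apply: eq_bigr => j _.
  rewrite -ract_sumr (_ : \sum_i _ = y j * a) ?ractA //.
  by rewrite -[RHS]Hx1; apply: eq_bigr => i _; rewrite mulrA.
have EpD f : Big f -> forall u v, Ep x y f (u+v) = Ep x y f u + Ep x y f v.
  move=> /unEnd [fD fB] u v; rewrite /Ep -big_split; apply: eq_bigr => i _.
  by rewrite ractDl fD ractDl.
have EpS f : Big f -> Small (Ep x y f).
  by move=> hf; apply: mkEnd => [|a _ u]; [exact: EpD | exact: EpA hf u a].
have EpAdd (f g : P -> P) : Ep x y (endo_add f g) = endo_add (Ep x y f) (Ep x y g).
  apply: functional_extensionality => u; rewrite /Ep /endo_add -big_split.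
  by apply: eq_bigr => i _; rewrite ractDl.
have EpL g f : Small g -> Ep x y (endo_mul g f) = endo_mul g (Ep x y f).
  move=> /unEnd [gD gA]; apply: functional_extensionality => u.
  rewrite /Ep /endo_mul (addf_sum _ _ _ gD); apply: eq_bigr => i _; by rewrite gA.
have EpR f g : Small g -> Ep x y (endo_mul f g) = endo_mul (Ep x y f) g.
  move=> /unEnd [gD gA]; apply: functional_extensionality => u.
  rewrite /Ep /endo_mul; apply: eq_bigr => i _; by rewrite gA.
have XB t : Big (Xt E pj x psi t).
  apply: mkEnd => [u v|b hb u]; rewrite /Xt.
    by rewrite psiD ED' mulrDr ractDr.
  by rewrite psiA (EBr' _ _ hb) mulrA ractA.
have YB t : Big (Yt E qs y phi t).
  apply: mkEnd => [u v|b hb u]; rewrite /Yt.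
    by rewrite phiD mulrDr ED' ractDr.
  by rewrite phiA mulrA (EBr' _ _ hb) ractA.
have BigM f g : Big f -> Big g -> Big (endo_mul f g).
  move=> /unEnd [fD fB] /unEnd [gD gB]; apply: mkEnd => [u v|b hb u]; rewrite /endo_mul.
    by rewrite gD fD.
  by rewrite gB // fB.
have SB f : Small f -> Big f.
  by move=> /unEnd [fD fB]; apply: mkEnd => // b _; exact: fB.
have Big0 : Big (@endo_zero A P).
  by apply: mkEnd => [u v|b _ u]; rewrite /endo_zero ?addr0 // /ract scaler0.
have BigD f g : Big f -> Big g -> Big (endo_add f g).
  move=> /unEnd [fD fB] /unEnd [gD gB]; apply: mkEnd => [u v|b hb u]; rewrite /endo_add.
    by rewrite fD gD addrACA.
  by rewrite fB // gB // ractDl.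
have EpX f t : Big f -> forall u, Ep x y (endo_mul f (Xt E pj x psi t)) u =
    ract (f (ract (pj t.1.1) (x t.1.2))) (psi t.2 u).
  move=> /unEnd [fD fB] u; rewrite /Ep /endo_mul /Xt.
  transitivity (\sum_i ract (f (ract (pj t.1.1) (x t.1.2))) (E (psi t.2 u * x i) * y i)).
    by apply: eq_bigr => i _; rewrite psiA -ractA fB // ractA.
  by rewrite -ract_sumr Hx1.
have EpY f t : Big f -> forall v, Ep x y (endo_mul (Yt E qs y phi t) f) v =
    ract (qs t.2) (\sum_i E (y t.1.2 * phi t.1.1 (f (ract v (x i)))) * y i).
  move=> hf v; rewrite /Ep /endo_mul /Yt ract_sumr; apply: eq_bigr => i _; exact: ractA.

have endo_addE (f g : P -> P) u : endo_add f g u = f u + g u by [].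
have endo_mulE (f g : P -> P) u : endo_mul f g u = f (g u) by [].
pose T : finType := ('I_m * 'I_n * 'I_L)%type.
pose X (i : 'I_#|T|) := Xt E pj x psi (enum_val i).
pose Y (i : 'I_#|T|) := Yt E qs y phi (enum_val i).
have Id1 f : Big f ->
    \big[@endo_add A P/@endo_zero A P]_(i < #|T|) endo_mul (Ep x y (endo_mul f (X i))) (Y i) = f.
  move=> hf; have [fD fB] := unEnd _ _ hf; apply: functional_extensionality => u.
  rewrite endo_big_pt.
  transitivity (\sum_(t : T) endo_mul (Ep x y (endo_mul f (Xt E pj x psi t))) (Yt E qs y phi t) u).
    by rewrite [RHS]my_sum_enum.
  rewrite my_triple_sum.
  transitivity (\sum_j \sum_k ract (f (ract (pj j) (x k))) (E (y k * phi j u))).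
    apply: eq_bigr => j _; apply: eq_bigr => k _.
    transitivity (\sum_l ract (f (ract (pj j) (x k))) (psi l (qs l) * E (y k * phi j u))).
      by apply: eq_bigr => l _; rewrite endo_mulE EpX //= /Yt /= psiA.
    by rewrite -ract_sumr -mulr_suml gen1 mul1r.
  transitivity (f (\sum_j ract (pj j) (phi j u))); last by rewrite -dual.
  rewrite (addf_sum _ _ _ fD); apply: eq_bigr => j _.
  rewrite -{2}(Hx2 (phi j u)) ract_sumr (addf_sum _ _ _ fD); apply: eq_bigr => k _.
  by rewrite -ractA (fB _ (EB' _)).
have Id2 f : Big f ->
    \big[@endo_add A P/@endo_zero A P]_(i < #|T|) endo_mul (X i) (Ep x y (endo_mul (Y i) f)) = f.
  move=> hf; have [fD fB] := unEnd _ _ hf; apply: functional_extensionality => v.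
  rewrite endo_big_pt.
  transitivity (\sum_(t : T) endo_mul (Xt E pj x psi t) (Ep x y (endo_mul (Yt E qs y phi t) f)) v).
    by rewrite [RHS]my_sum_enum.
  rewrite my_triple_sum.
  transitivity (\sum_j \sum_k ract (pj j)
     (x k * \sum_i E (y k * phi j (f (ract v (x i)))) * E (y i))).
    apply: eq_bigr => j _; apply: eq_bigr => k _.
    transitivity (\sum_l ract (pj j) (x k * E (psi l (qs l) *
        \sum_i E (y k * phi j (f (ract v (x i)))) * y i))).
      by apply: eq_bigr => l _; rewrite endo_mulE EpY //= /Xt /= psiA.
    rewrite -ract_sumr -mulr_sumr -Esum -mulr_suml gen1 mul1r Esum.
    by congr (ract _ (_ * _)); apply: eq_bigr => i _; rewrite EBl'.
  transitivity (\sum_j ract (pj j) (\sum_i phi j (f (ract v (x i))) * E (y i))).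
    apply: eq_bigr => j _; rewrite -ract_sumr; congr ract.
    rewrite (eq_bigr (fun k => \sum_i x k * (E (y k * phi j (f (ract v (x i)))) * E (y i))));
      last by move=> k _; rewrite mulr_sumr.
    rewrite exchange_big; apply: eq_bigr => i _ /=.
    by rewrite -[in RHS](Hx2 (phi j (f (ract v (x i))))) mulr_suml; apply: eq_bigr => k _; rewrite mulrA.
  transitivity (\sum_i ract (f (ract v (x i))) (E (y i))).
    rewrite (eq_bigr (fun j => \sum_i ract (ract (pj j) (phi j (f (ract v (x i))))) (E (y i))));
      last by move=> j _; rewrite ract_sumr; apply: eq_bigr => i _; rewrite ractA.
    by rewrite exchange_big; apply: eq_bigr => i _; rewrite -ract_suml -dual.
  transitivity (f (ract v (\sum_i x i * E (y i)))).
    by rewrite ract_sumr (addf_sum _ _ _ fD); apply: eq_bigr => i _; rewrite -ractA (fB _ (EB' _)).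
  rewrite (_ : \sum_i _ = 1) ?ract1 //.
  by rewrite -[RHS](Hx2 1); apply: eq_bigr => i _; rewrite mulr1.
split.
  exists #|T|, (fun a i => Ep x y (endo_mul (Y i) a)),
    (fun v => \big[@endo_add A P/@endo_zero A P]_(i < #|T|) endo_mul (X i) (v i)).
  split; [split|split; [split|]].
  - by move=> a ha i; apply: EpS; apply: BigM => //; exact: YB.
  - move=> a a' ha ha' i; rewrite -EpAdd; congr Ep.
    apply: functional_extensionality => u; rewrite endo_mulE !endo_addE !endo_mulE.
    exact: (unEnd _ _ (YB _)).1.
  - by move=> a t ha ht i; rewrite -EpR.
  - move=> v hv; apply: (big_ind Big); [exact: Big0 | exact: BigD |].
    by move=> i _; apply: BigM; [exact: XB | exact: SB (hv i)].
  - move=> v w hv hw; apply: functional_extensionality => u.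
    rewrite endo_addE !endo_big_pt -big_split; apply: eq_bigr => i _.
    rewrite !endo_mulE endo_addE; exact: (unEnd _ _ (XB _)).1.
  - move=> v t hv ht; apply: functional_extensionality => u.
    by rewrite endo_mulE !endo_big_pt.
  - exact: Id2.
exists (Ep x y); split.
- by move=> a ha; exact: EpS.
- by move=> a a' _ _; exact: EpAdd.
- by move=> b a hb _; exact: EpL.
- by move=> a b _ hb; exact: EpR.
- exists #|T|, X, Y; split; first by move=> i; split; [exact: XB | exact: YB].
  by move=> a ha; split; [exact: Id1 | exact: Id2].
Qed.
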